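(* Let $\mathcal P_{XY}$ be any distribution on $\mathbb R^p\times\mathbb R$ and let $Z_i=(X_i,Y_i)$, $i=1,\dots,n+1$, be i.i.d. draws from $\mathcal P_{XY}$. Let $\mathcal Z=\{Z_1,\dots,Z_{n+1}\}$ and $\mathcal X=\{X_1,\dots,X_{n+1}\}$ denote the unordered sets of observations and of features. Let $V(z)=V(z;\mathcal Z)$ be a real-valued score function whose form may depend on the data only through $\mathcal Z$, and set $V_i=V(Z_i;\mathcal Z)$. Let $H:\mathbb R^p\times\mathbb R^p\to[0,1]$ be a localizer function whose form may depend on the data only through $\mathcal X$, with $H(x,x)=1$ for all $x$. Put $H_{ij}=H(X_i,X_j)$ and $p^H_{ij}=H_{ij}/\sum_{k=1}^{n+1}H_{ik}$, and define the weighted distributions $$\hat{\mathcal F}_i=\sum_{j=1}^{n+1}p^H_{ij}\delta_{V_j}\quad(i=1,\dots,n+1),\qquad \hat{\mathcal F}=\sum_{j=1}^{n}p^H_{n+1,j}\delta_{V_j}+p^H_{n+1,n+1}\delta_{+\infty}.$$ Let $\Gamma=\{\sum_{k\in I}p^H_{ik}: i\in\{1,\dots,n+1\},\ I\subseteq\{1,\dots,n+1\}\}$ and fix $\alpha\in(0,1)$. Let $\tilde\alpha$ be the smallest value in $\Gamma$ such that $$\frac{1}{n+1}\sum_{i=1}^{n+1}\mathbb 1\{V_i\le Q(\tilde\alpha;\hat{\mathcal F}_i)\}\ge\alpha.$$ Then $\mathbb P\{V_{n+1}\le Q(\tilde\alpha;\hat{\mathcal F}_{n+1})\}\ge\alpha$,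 and equivalently $\mathbb P\{V_{n+1}\le Q(\tilde\alpha;\hat{\mathcal F})\}\ge\alpha$.
   Context: For a distribution $\mathcal F$ on $\mathbb R\cup\{+\infty\}$, $Q(\alpha;\mathcal F)=\inf\{t:\mathbb P_{T\sim\mathcal F}(T\le t)\ge\alpha\}$ is its level-$\alpha$ quantile. $\delta_v$ is the point mass at $v$. All scores $V_i$ (and hence $\hat{\mathcal F}_i,\hat{\mathcal F},\tilde\alpha$) may depend on $Y_{n+1}$ through $\mathcal Z$. *)

(* Defs.v *)
From HB Require Import structures.
From mathcomp Require Import all_boot all_order all_algebra fingroup perm.
From mathcomp Require Import all_classical all_reals all_analysis.
Set Implicit Arguments.
Unset Strict Implicit.
Unset Printing Implicit Defensive.
Import Order.TTheory GRing.Theory Num.Theory.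
Local Open Scope classical_set_scope.
Local Open Scope ring_scope.

Definition coord_preimages (I : Type) d (T : measurableType d) :
  set (set (I -> T)) :=
  [set C | exists i, exists2 A, measurable A & C = (fun f => f i) @^-1` A].

Definition prodfun (I : Type) d (T : measurableType d) :=
  g_sigma_algebraType (@coord_preimages I d T).

(* R^p with its (product = Borel) sigma-algebra. *)
Definition Rpow (R : realType) (p : nat) := prodfun 'I_p R.

(* rule; taking some A i = setT gives the rule for every subfamily).       *)
Definition mutually_independent d dT (Omega : measurableType d)
  (T : measurableType dT) (R : realType) (P : probability Omega R) (m : nat)
  (Z : 'I_m -> Omega -> T) : Prop :=
  forall A : 'I_m -> set T, (forall i, measurable (A i)) ->
    P (\bigcap_(i in [set: 'I_m]) (Z i @^-1` A i)) =
    (\prod_(i < m) P (Z i @^-1` A i))%E.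

Definition iid_from d dT (Omega : measurableType d)
  (T : measurableType dT) (R : realType) (P : probability Omega R) (m : nat)
  (Z : 'I_m -> Omega -> T) (PXY : probability T R) : Prop :=
  [/\ forall i, measurable_fun setT (Z i),
      forall i A, measurable A -> P (Z i @^-1` A) = PXY A
    & mutually_independent P Z].

(* Level-a quantile of the discrete distribution sum_j w j delta_(v j) on   *)
(* R \cup {+oo}:  Q(a; F) = inf { t : F(T <= t) >= a }.                    *)
Definition quantile (R : realType) (m : nat) (a : R) (w : 'I_m -> R)
  (v : 'I_m -> \bar R) : \bar R :=
  ereal_inf [set t : \bar R | a <= \sum_(j < m | (v j <= t)%E) w j].

Section LCP.
Variables (R : realType) (p n : nat).
Definition dataT := (Rpow R p * R)%type.
(* a realization (Z_1, ..., Z_{n+1}); index n+1 of the paper is ord_max *)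
Definition sampleT := 'I_n.+1 -> dataT.
Definition featT := 'I_n.+1 -> Rpow R p.

(* score functions depending on the data only through the unordered set   *)
Definition symmetric_score (V : sampleT -> dataT -> R) : Prop :=
  forall (s : {perm 'I_n.+1}) (z : sampleT) (t : dataT), V (z \o s) t = V z t.
(* localizers depending on the data only through the unordered features   *)
Definition localizer (H : featT -> Rpow R p -> Rpow R p -> R) : Prop :=
  [/\ forall (s : {perm 'I_n.+1}) (xs : featT) x x', H (xs \o s) x x' = H xs x x',
      forall xs x x', 0 <= H xs x x' <= 1
    & forall xs x, H xs x x = 1].

Variables (V : sampleT -> dataT -> R) (H : featT -> Rpow R p -> Rpow R p -> R).
Variable (alpha : R).

Definition feats (z : sampleT) : featT := fun i => (z i).1.
Definition Vs (z : sampleT) (i : 'I_n.+1) : R := V z (z i).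
Definition Hm (z : sampleT) (i j : 'I_n.+1) : R :=
  H (feats z) (feats z i) (feats z j).
Definition pH (z : sampleT) (i j : 'I_n.+1) : R :=
  Hm z i j / \sum_(k < n.+1) Hm z i k.

Definition Q_i (z : sampleT) (a : R) (i : 'I_n.+1) : \bar R :=
  quantile a (pH z i) (fun j => (Vs z j)%:E).
Definition Q_hat (z : sampleT) (a : R) : \bar R :=
  quantile a (pH z ord_max)
    (fun j => if j == ord_max then +oo%E else (Vs z j)%:E).

Definition Gamma (z : sampleT) : set R :=
  [set g | exists i : 'I_n.+1, exists I : {set 'I_n.+1},
           g = \sum_(k in I) pH z i k].

Definition coverage_ok (z : sampleT) (a : R) : Prop :=
  alpha <= (n.+1%:R)^-1 *
           \sum_(i < n.+1) (((Vs z i)%:E <= Q_i z a i)%E : nat)%:R.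

Definition alpha_tilde (z : sampleT) : R :=
  inf [set g | Gamma z g /\ coverage_ok z g].
End LCP.

(* Main.v *)
Require Import Defs.
From HB Require Import structures.
From mathcomp Require Import all_boot all_order all_algebra fingroup perm.
From mathcomp Require Import all_classical all_reals all_analysis.
From mathcomp Require Import measurable_realfun.
Import Order.TTheory GRing.Theory Num.Theory.
Local Open Scope classical_set_scope.
Local Open Scope ring_scope.

Section LawEq.
Context d (Omega : measurableType d) (R : realType) (P : probability Omega R)
  dX (X : measurableType dX) (f g : Omega -> X).
Hypotheses (mf : measurable_fun setT f) (mg : measurable_fun setT g).

Let muf := pushforward P f.
Let mug := pushforward P g.
Let muf0 : muf set0 = 0%E. Proof. by rewrite /muf /pushforward preimage_set0 measure0. Qed.
Let mug0 : mug set0 = 0%E. Proof. by rewrite /mug /pushforward preimage_set0 measure0. Qed.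
Let muf_ge0 A : (0 <= muf A)%E. Proof. exact: measure_ge0. Qed.
Let mug_ge0 A : (0 <= mug A)%E. Proof. exact: measure_ge0. Qed.
Let muf_sa : semi_sigma_additive muf.
Proof.
move=> F mF tF mUF; rewrite /muf /pushforward preimage_bigcup.
apply: measure_semi_sigma_additive.
- by move=> n; rewrite -[X in measurable X]setTI; exact: mf.
- apply/trivIsetP => /= i j _ _ ij; rewrite -preimage_setI.
  by move/trivIsetP : tF => /(_ _ _ _ _ ij) ->//; rewrite preimage_set0.
- by rewrite -preimage_bigcup -[X in measurable X]setTI; exact: mf.
Qed.
Let mug_sa : semi_sigma_additive mug.
Proof.
move=> F mF tF mUF; rewrite /mug /pushforward preimage_bigcup.
apply: measure_semi_sigma_additive.
- by move=> n; rewrite -[X in measurable X]setTI; exact: mg.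
- apply/trivIsetP => /= i j _ _ ij; rewrite -preimage_setI.
  by move/trivIsetP : tF => /(_ _ _ _ _ ij) ->//; rewrite preimage_set0.
- by rewrite -preimage_bigcup -[X in measurable X]setTI; exact: mg.
Qed.
HB.instance Definition _ := isMeasure.Build _ _ _ muf muf0 muf_ge0 muf_sa.
HB.instance Definition _ := isMeasure.Build _ _ _ mug mug0 mug_ge0 mug_sa.

Lemma law_eq (G : set (set X)) : @measurable _ X = <<s G>> -> setI_closed G -> G setT ->
  (forall A, G A -> P (f @^-1` A) = P (g @^-1` A)) ->
  forall A, measurable A -> P (f @^-1` A) = P (g @^-1` A).
Proof.
move=> mG GI GT agree A mA.
have := @measure_unique _ R X G (fun _ => setT) mG GI (fun _ => GT) _ muf mug agree _ A mA.
apply.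
- by rewrite bigcup_const.
- by move=> _; change (P (f @^-1` setT) < +oo)%E; rewrite preimage_setT probability_setT ltry.
Qed.
End LawEq.

Section Exch.
Context d (Omega : measurableType d) (R : realType) (P : probability Omega R)
  dT (T : measurableType dT) (m : nat) (Z : 'I_m -> Omega -> T) (PXY : probability T R).

Definition rect (A : 'I_m -> set T) : set (prodfun 'I_m T) := [set z | forall i, A i (z i)].
Definition rects : set (set (prodfun 'I_m T)) :=
  [set C | exists2 A : 'I_m -> set T, (forall i, measurable (A i)) & C = rect A].

Lemma coord_meas i (A : set T) : measurable A ->
  measurable ((fun z : prodfun 'I_m T => z i) @^-1` A).
Proof. by move=> mA; apply: sub_sigma_algebra; exists i; exists A. Qed.

Lemma rect_meas A : (forall i, measurable (A i)) -> measurable (rect A).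
Proof.
move=> mA; have -> : rect A = \bigcap_(i in [set: 'I_m])
    ((fun z : prodfun 'I_m T => z i) @^-1` A i).
  by apply/seteqP; split => z /= h i; [move=> _; exact: h | exact: h].
apply: fin_bigcap_measurable; first exact: finite_finset.
by move=> i _; exact: coord_meas.
Qed.

Lemma rects_gen : @measurable _ (prodfun 'I_m T) = <<s rects>>.
Proof.
apply/seteqP; split.
- apply: smallest_sub; first exact: smallest_sigma_algebra.
  move=> _ [i [A mA ->]].
  apply: sub_sigma_algebra; exists (fun j => if j == i then A else setT).
    by move=> j; case: ifP.
  apply/seteqP; split => z /=; first by move=> Az j; case: eqP => // ->.
  by move=> /(_ i); rewrite eqxx.
- apply: smallest_sub; first exact: sigma_algebra_measurable.
  by move=> _ [A mA ->]; exact: rect_meas.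
Qed.

Lemma rectsI : setI_closed rects.
Proof.
move=> _ _ [A mA ->] [B mB ->]; exists (fun i => A i `&` B i).
  by move=> i; exact: measurableI.
by apply/seteqP; split => z /=; [move=> [a b] i; split|move=> h; split => i; case: (h i)].
Qed.

Lemma rectsT : rects setT.
Proof. by exists (fun _ => setT) => //; apply/seteqP; split. Qed.

Lemma prodfun_meas (f : Omega -> prodfun 'I_m T) :
  (forall i, measurable_fun setT (fun w => f w i)) -> measurable_fun setT f.
Proof.
move=> mf; apply: (@measurability _ _ Omega (prodfun 'I_m T) setT f (@coord_preimages 'I_m dT T)) => //.
move=> _ [_ [i [A mA ->]] <-].
exact: mf i measurableT A mA.
Qed.

Hypothesis iid : iid_from P Z PXY.

Lemma exch (s : {perm 'I_m}) (B : set (prodfun 'I_m T)) : measurable B ->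
  P ((fun w => (fun i => Z i w) : prodfun 'I_m T) @^-1` B) =
  P ((fun w => (fun i => Z (s i) w) : prodfun 'I_m T) @^-1` B).
Proof.
case: iid => mZ PZ ind.
have m1 : measurable_fun setT (fun w => (fun i => Z i w) : prodfun 'I_m T).
  by apply: prodfun_meas => i; exact: mZ.
have m2 : measurable_fun setT (fun w => (fun i => Z (s i) w) : prodfun 'I_m T).
  by apply: prodfun_meas => i; exact: mZ.
apply: (@law_eq _ _ _ P _ _ _ _ m1 m2 _ rects_gen rectsI rectsT).
move=> _ [A mA ->].
have -> : (fun w => (fun i => Z i w) : prodfun 'I_m T) @^-1` rect A =
   \bigcap_(i in [set: 'I_m]) (Z i @^-1` A i).
  by apply/seteqP; split => w /= h i; [move=> _; exact: h | exact: h].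
have -> : (fun w => (fun i => Z (s i) w) : prodfun 'I_m T) @^-1` rect A =
   \bigcap_(i in [set: 'I_m]) (Z i @^-1` A ((s^-1)%g i)).
  apply/seteqP; split => w /= h i.
    by move=> _; have := h ((s^-1)%g i); rewrite permKV.
  by have := h (s i) I; rewrite permK.
rewrite ind // ind //.
under eq_bigr do rewrite PZ //.
under [RHS]eq_bigr do rewrite PZ //.
rewrite [RHS](reindex_inj (@perm_inj _ s)) /=.
by apply: eq_bigr => i _; rewrite permK.
Qed.
End Exch.

Lemma quantile_le (R : realType) (m : nat) (a : R) (w : 'I_m -> R) (v : 'I_m -> \bar R) (x : R) :
  (forall j, 0 <= w j) ->
  ((x%:E <= quantile a w v)%E = (\sum_(j < m | (v j < x%:E)%E) w j < a)).
Proof.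
move=> w0; apply/idP/idP.
- move=> hx; rewrite ltNge; apply/negP => ha.
  set t := \big[Order.max/-oo%E]_(j < m | (v j < x%:E)%E) v j.
  have tx : (t < x%:E)%E.
    rewrite /t; elim/big_ind: _ => //; first exact: ltNyr.
    by move=> y z yx zx; rewrite gt_max yx zx.
  have St : a <= \sum_(j < m | (v j <= t)%E) w j.
    rewrite (le_trans ha) // le_eqVlt; apply/orP; left; apply/eqP.
    apply: eq_bigl => j; apply/idP/idP => hj.
      rewrite /t (bigD1 j) //=; by rewrite le_max lexx.
    exact: le_lt_trans hj tx.
  have qt : (quantile a w v <= t)%E by apply: ereal_inf_lbound; exact: St.
  by have := le_lt_trans (le_trans hx qt) tx; rewrite ltxx.
- move=> ha; apply/ereal_infP => t /= ht; rewrite leNgt; apply/negP => tx.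
  have : \sum_(j < m | (v j <= t)%E) w j <= \sum_(j < m | (v j < x%:E)%E) w j.
    rewrite [X in X <= _]big_mkcond [X in _ <= X]big_mkcond /=.
    apply: ler_sum => j _; case: ifP => h1; case: ifP => h2 //.
    by rewrite (le_lt_trans h1 tx) in h2.
  by move=> /(le_trans ht) h; have := lt_le_trans ha h; rewrite ltxx.
Qed.

From mathcomp Require Import lra.

Section LCPproof.
Context (R : realType) (p n : nat) (V : sampleT R p n -> dataT R p -> R)
  (H : featT R p n -> Rpow R p -> Rpow R p -> R) (alpha : R).
Hypotheses (symV : symmetric_score V) (locH : localizer H) (alpha1 : alpha <= 1).

Lemma Hm_ge0 z i j : 0 <= Hm H z i j.
Proof. by case: locH => _ h _; case/andP: (h (feats z) (feats z i) (feats z j)). Qed.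

Lemma Hm_ii z i : Hm H z i i = 1.
Proof. by case: locH => _ _ h; rewrite /Hm h. Qed.

Definition Dn z i := \sum_(k < n.+1) Hm H z i k.

Lemma Dn_ge1 z i : 1 <= Dn z i.
Proof.
rewrite /Dn (bigD1 i) //= Hm_ii lerDl sumr_ge0 // => k _; exact: Hm_ge0.
Qed.

Lemma Dn_gt0 z i : 0 < Dn z i.
Proof. exact: lt_le_trans ltr01 (Dn_ge1 z i). Qed.

Lemma pH_ge0 z i j : 0 <= pH H z i j.
Proof. by rewrite /pH divr_ge0 ?Hm_ge0 // ltW // (Dn_gt0 z i). Qed.

Lemma pH_sum z i : \sum_(k < n.+1) pH H z i k = 1.
Proof. by rewrite /pH -mulr_suml mulfV // gt_eqF // (Dn_gt0 z i). Qed.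

Definition Sl z i := \sum_(j < n.+1 | Vs V z j < Vs V z i) pH H z i j.

Lemma Qi_le z a i : ((Vs V z i)%:E <= Q_i V H z a i)%E = (Sl z i < a).
Proof.
rewrite /Q_i quantile_le; last exact: pH_ge0.
by rewrite /Sl; congr (_ < _); apply: eq_bigl => j; rewrite lte_fin.
Qed.

Lemma Sl_lt1 z i : Sl z i < 1.
Proof.
have := pH_sum z i; rewrite (bigID (fun j => Vs V z j < Vs V z i)) /= -/(Sl z i) => e.
have h1 : pH H z i i <= \sum_(j < n.+1 | ~~ (Vs V z j < Vs V z i)) pH H z i j.
  by rewrite (bigD1 i) ?ltxx //= lerDl sumr_ge0 // => *; exact: pH_ge0.
have h2 : 0 < pH H z i i by rewrite /pH Hm_ii divr_gt0 // (Dn_gt0 z i).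
lra.
Qed.

Lemma Vs_perm (s : {perm 'I_n.+1}) z i : Vs V (z \o s) i = Vs V z (s i).
Proof. by rewrite /Vs symV. Qed.

Lemma Hm_perm (s : {perm 'I_n.+1}) z i j : Hm H (z \o s) i j = Hm H z (s i) (s j).
Proof. by case: locH => h _ _; rewrite /Hm; exact: h. Qed.

Lemma Dn_perm (s : {perm 'I_n.+1}) z i : Dn (z \o s) i = Dn z (s i).
Proof.
rewrite /Dn; under eq_bigr do rewrite Hm_perm.
by rewrite [RHS](reindex_inj (@perm_inj _ s)).
Qed.

Lemma pH_perm (s : {perm 'I_n.+1}) z i j : pH H (z \o s) i j = pH H z (s i) (s j).
Proof. rewrite /pH Hm_perm; congr (_ / _); exact: Dn_perm. Qed.

Lemma Sl_perm (s : {perm 'I_n.+1}) z i : Sl (z \o s) i = Sl z (s i).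
Proof.
rewrite /Sl (eq_big (fun j => Vs V z (s j) < Vs V z (s i)) (fun j => pH H z (s i) (s j))).
- by rewrite [RHS](reindex_inj (@perm_inj _ s)).
- by move=> j; rewrite !Vs_perm.
- by move=> j _; rewrite pH_perm.
Qed.

Lemma Qi_perm (s : {perm 'I_n.+1}) z a i :
  ((Vs V (z \o s) i)%:E <= Q_i V H (z \o s) a i)%E =
  ((Vs V z (s i))%:E <= Q_i V H z a (s i))%E.
Proof. by rewrite !Qi_le Sl_perm. Qed.

Definition covS z a := alpha <= (n.+1%:R)^-1 * \sum_(i < n.+1) ((Sl z i < a)%R : nat)%:R.

Lemma cov_iff z a : coverage_ok V H alpha z a <-> covS z a.
Proof.
rewrite /coverage_ok /covS.
suff -> : \sum_(i < n.+1) ((((Vs V z i)%:E <= Q_i V H z a i)%E : nat)%:R : R) =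
          \sum_(i < n.+1) ((Sl z i < a)%R : nat)%:R by [].
by apply: eq_bigr => i _; rewrite Qi_le.
Qed.

Lemma covS_perm (s : {perm 'I_n.+1}) z a : covS (z \o s) a = covS z a.
Proof.
rewrite /covS; under eq_bigr do rewrite Sl_perm.
by rewrite [in RHS](reindex_inj (@perm_inj _ s)).
Qed.

Lemma Gamma_sub (s : {perm 'I_n.+1}) z g : Gamma H z g -> Gamma H (z \o s) g.
Proof.
move=> [i [I ->]]; exists ((s^-1)%g i), [set k : 'I_n.+1 | s k \in I]%SET.
under [RHS]eq_bigr => k _ do rewrite pH_perm permKV.
rewrite (reindex_inj (@perm_inj _ s)) /=; apply: eq_bigl => k.
by rewrite inE.
Qed.

Lemma Gamma_perm (s : {perm 'I_n.+1}) z : Gamma H (z \o s) = Gamma H z.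
Proof.
apply/seteqP; split => g; last exact: Gamma_sub.
move=> /(Gamma_sub (s^-1)%g).
have -> // : (z \o s) \o (s^-1)%g = z by apply/funext => i /=; rewrite permKV.
Qed.

Lemma atil_perm (s : {perm 'I_n.+1}) z :
  alpha_tilde V H alpha (z \o s) = alpha_tilde V H alpha z.
Proof.
rewrite /alpha_tilde Gamma_perm; congr inf; apply/seteqP; split => g [Gg cg];
  split => //; apply/cov_iff.
- by rewrite -(covS_perm s); exact/cov_iff.
- by rewrite covS_perm; exact/cov_iff.
Qed.

Definition Ev z i := ((Vs V z i)%:E <= Q_i V H z (alpha_tilde V H alpha z) i)%E.

Lemma Ev_perm (s : {perm 'I_n.+1}) z i : Ev (z \o s) i = Ev z (s i).
Proof. by rewrite /Ev atil_perm Qi_perm. Qed.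

Definition C := ('I_n.+1 * {set 'I_n.+1})%type.
Definition gc z (c : C) := \sum_(k in c.2) pH H z c.1 k.
Definition hc z c := if covS z (gc z c) then gc z c else 1.
Definition atil z := \big[Order.min/1]_(c : C) hc z c.

Lemma bigmin_le (F : C -> R) (s : seq C) x : x \in s -> \big[Order.min/1]_(c <- s) F c <= F x.
Proof.
elim: s => [//|c s IH]; rewrite inE big_cons ge_min => /orP [/eqP ->|xs].
  by rewrite lexx.
by rewrite IH ?orbT.
Qed.

Lemma covS1 z : covS z 1.
Proof.
rewrite /covS; under eq_bigr do rewrite Sl_lt1.
by rewrite sumr_const card_ord mulr1n mulVf ?pnatr_eq0.
Qed.

Lemma gc_full z i : gc z (i, [set: 'I_n.+1]%SET) = 1.
Proof. by rewrite /gc /= (eq_bigl xpredT) ?pH_sum // => k; rewrite !inE. Qed.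

Lemma atil_in z : [set g | Gamma H z g /\ coverage_ok V H alpha z g] (atil z).
Proof.
rewrite /atil; apply: (big_ind (fun x => Gamma H z x /\ coverage_ok V H alpha z x)).
- split; last exact/cov_iff/covS1.
  by exists ord0, [set: 'I_n.+1]%SET; exact: (esym (gc_full z ord0)).
- by move=> x y hx hy; rewrite /Order.min; case: ifP.
- move=> c _; rewrite /hc; case: ifP => h.
    by split; [exists c.1, c.2 | exact/cov_iff].
  split; last exact/cov_iff/covS1.
  by exists ord0, [set: 'I_n.+1]%SET; exact: (esym (gc_full z ord0)).
Qed.

Lemma atil_le z g : Gamma H z g -> coverage_ok V H alpha z g -> atil z <= g.
Proof.
move=> [i [I ->]] /cov_iff cg.
have := bigmin_le (hc z) _ _ (mem_index_enum (i, I)).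
by rewrite /hc /gc /= cg.
Qed.

Lemma atilE z : alpha_tilde V H alpha z = atil z.
Proof.
rewrite /alpha_tilde; apply/eqP; rewrite eq_le; apply/andP; split.
- apply: ge_inf; last exact: atil_in.
  by exists (atil z) => g [Gg cg]; exact: atil_le.
- apply: lb_le_inf; first by exists (atil z); exact: atil_in.
  by move=> g [Gg cg]; exact: atil_le.
Qed.

Lemma cov_atil z : coverage_ok V H alpha z (alpha_tilde V H alpha z).
Proof. by rewrite atilE; case: (atil_in z). Qed.

Lemma Ev_atil z i : Ev z i = (Sl z i < atil z).
Proof. by rewrite /Ev Qi_le atilE. Qed.



Hypothesis hV : measurable_fun setT
    (fun zt : (prodfun 'I_n.+1 (dataT R p) * dataT R p)%type => V zt.1 zt.2).
Hypothesis hH : measurable_fun setT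
    (fun xs : (prodfun 'I_n.+1 (Rpow R p) * (Rpow R p * Rpow R p))%type =>
       H xs.1 xs.2.1 xs.2.2).

Local Notation T0 := (prodfun 'I_n.+1 (dataT R p)).

Lemma m_proj i : measurable_fun setT (fun z : T0 => z i).
Proof. by move=> _ A mA; rewrite setTI; exact: coord_meas. Qed.

Lemma m_Vs i : measurable_fun setT (fun z : T0 => Vs V z i).
Proof.
exact: (measurableT_comp hV (measurable_fun_pair (@measurable_id _ T0 setT) (m_proj i))).
Qed.

Lemma m_fst i : measurable_fun setT (fun z : T0 => (z i).1).
Proof. exact: (measurableT_comp measurable_fst (m_proj i)). Qed.

Lemma m_feats : measurable_fun setT (fun z : T0 => (feats z : prodfun 'I_n.+1 (Rpow R p))).
Proof. by apply: prodfun_meas => i; exact: m_fst. Qed.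

Lemma m_Hm i j : measurable_fun setT (fun z : T0 => Hm H z i j).
Proof.
exact: (measurableT_comp hH (measurable_fun_pair m_feats
   (measurable_fun_pair (m_fst i) (m_fst j)))).
Qed.

Let finv (x : R) := (Order.max x 1)^-1.

Let m_finv : measurable_fun setT finv.
Proof.
apply: measurable_realfun.nonincreasing_measurable => // s t st.
rewrite /finv lef_pV2 ?posrE.
- by rewrite ge_max !le_max st lexx !orbT.
- by rewrite (lt_le_trans ltr01) // le_max lexx orbT.
- by rewrite (lt_le_trans ltr01) // le_max lexx orbT.
Qed.

Lemma m_pH i j : measurable_fun setT (fun z : T0 => pH H z i j).
Proof.
have -> : (fun z : T0 => pH H z i j) = (fun z => Hm H z i j * finv (Dn z i)).
  apply/funext => z; rewrite /pH /finv max_l //; exact: Dn_ge1.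
apply: measurable_realfun.measurable_funM; first exact: m_Hm.
apply: (measurableT_comp m_finv); rewrite /Dn.
by apply: measurable_sum => k; exact: m_Hm.
Qed.

Lemma m_Sl i : measurable_fun setT (fun z : T0 => Sl z i).
Proof.
have -> : (fun z : T0 => Sl z i) = (fun z : T0 => \sum_(j < n.+1)
    (if Vs V z j < Vs V z i then pH H z i j else 0)).
  by apply/funext => z; rewrite /Sl big_mkcond.
apply: measurable_sum => j; apply: measurable_fun_ifT.
- exact: measurable_realfun.measurable_fun_ltr (m_Vs j) (m_Vs i).
- exact: m_pH.
- exact: measurable_cst.
Qed.

Lemma m_gc c : measurable_fun setT (fun z : T0 => gc z c).
Proof.
have -> : (fun z : T0 => gc z c) = (fun z : T0 => \sum_(k < n.+1)
    (if k \in c.2 then pH H z c.1 k else 0)).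
  by apply/funext => z; rewrite /gc big_mkcond.
apply: measurable_sum => k; case: (k \in c.2).
- exact: m_pH.
- exact: measurable_cst.
Qed.

Lemma m_covS c : measurable_fun setT (fun z : T0 => covS z (gc z c)).
Proof.
rewrite /covS; apply: measurable_realfun.measurable_fun_ler; first exact: measurable_cst.
apply: measurable_realfun.measurable_funM; first exact: measurable_cst.
apply: measurable_sum => i.
have -> : (fun z : T0 => (((Sl z i < gc z c)%R : nat)%:R : R)) =
          (fun z => if Sl z i < gc z c then 1 else 0).
  by apply/funext => z; case: (_ < _).
apply: measurable_fun_ifT; last exact: measurable_cst; last exact: measurable_cst.
exact: measurable_realfun.measurable_fun_ltr (m_Sl i) (m_gc c).
Qed.

Lemma m_hc c : measurable_fun setT (fun z : T0 => hc z c).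
Proof.
rewrite /hc; apply: measurable_fun_ifT; [exact: m_covS|exact: m_gc|exact: measurable_cst].
Qed.

Lemma m_atil : measurable_fun setT (fun z : T0 => atil z).
Proof.
have h : forall s : seq C,
    measurable_fun setT (fun z : T0 => \big[Order.min/1]_(c <- s) hc z c).
  elim => [|c s IH].
    have -> : (fun z : T0 => \big[Order.min/1]_(c <- [::]) hc z c) = (fun _ => 1).
      by apply/funext => z; rewrite big_nil.
    exact: measurable_cst.
  have -> : (fun z : T0 => \big[Order.min/1]_(c0 <- c :: s) hc z c0) =
     (fun z => Order.min (hc z c) (\big[Order.min/1]_(c0 <- s) hc z c0)).
    by apply/funext => z; rewrite big_cons.
  exact: measurable_realfun.measurable_minr (m_hc c) IH.
exact: h.
Qed.

Lemma m_event i : measurable [set z : T0 | Ev z i].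
Proof.
have -> : [set z : T0 | Ev z i] = setT `&` (fun z : T0 => Sl z i < atil z) @^-1` [set true].
  by apply/seteqP; split => z /=; rewrite Ev_atil => // -[].
exact: measurable_realfun.measurable_fun_ltr (m_Sl i) m_atil measurableT _ _.
Qed.

Lemma Qhat_le z a : ((Vs V z ord_max)%:E <= Q_hat V H z a)%E = (Sl z ord_max < a).
Proof.
rewrite /Q_hat quantile_le; last exact: pH_ge0.
rewrite /Sl; congr (_ < _); apply: eq_bigl => j.
case: eqP => [->|_]; last by rewrite lte_fin.
by rewrite ltxx ltNge leey.
Qed.

Lemma final_main d (Omega : measurableType d) (P : probability Omega R)
  (PXY : probability (dataT R p) R) (Z : 'I_n.+1 -> Omega -> dataT R p) :
  0 < alpha ->
  iid_from P Z PXY ->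
  (alpha%:E <= P [set w | Ev ((fun i => Z i w) : sampleT R p n) ord_max])%E.
Proof.
move=> a0 iid.
pose Zs := fun w : Omega => (fun i => Z i w) : sampleT R p n.
have mZs (s : {perm 'I_n.+1}) :
    measurable_fun setT (fun w => (fun j => Z (s j) w) : T0).
  by apply: prodfun_meas => j; case: iid => mZ _ _; exact: mZ.
pose E i := [set w | Ev (Zs w) i].
have EE i : E i = (fun w => (fun j => Z (tperm ord_max i j) w) : T0) @^-1`
    [set z : T0 | Ev z ord_max].
  apply/seteqP; split => w /=;
    have e := Ev_perm (tperm ord_max i) (Zs w) ord_max; rewrite tpermL in e.
  - move=> h; rewrite (_ : (fun j => Z (tperm ord_max i j) w) = Zs w \o tperm ord_max i) //.
    by rewrite e.
  - by move=> h; rewrite /E /= -e; exact: h.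
have mE i : measurable (E i).
  rewrite EE -[X in measurable X]setTI; apply: (mZs _) => //; exact: m_event.
have PE i : P (E i) = P (E ord_max).
  rewrite EE -(@exch _ Omega R P _ _ n.+1 Z PXY iid (tperm ord_max i) _ (m_event ord_max)).
  by [].
have key : ((n.+1%:R * alpha)%:E <= \sum_(i < n.+1) P (E i))%E.
  have -> : \sum_(i < n.+1) P (E i) =
      (\int[P]_w (\sum_(i < n.+1) (\1_(E i) w)%:E))%E.
    have mI : forall i, measurable_fun setT (EFin \o (\1_(E i) : Omega -> R)).
      move=> i; apply/measurable_realfun.measurable_EFinP.
      exact: measurable_realfun.measurable_indic.
    have pI : forall i w, setT w -> (0 <= (\1_(E i) w)%:E :> \bar R)%E.
      by move=> i w _; rewrite lee_fin indicE; case: (_ \in _).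
    rewrite (ge0_integral_sum _ measurableT mI pI).
    by apply: eq_bigr => i _; rewrite integral_indic // setIT.
  have -> : ((n.+1%:R * alpha)%:E = \int[P]_w (cst (n.+1%:R * alpha)%:E w))%E.
    rewrite integral_cst // -[LHS]mule1; congr (_ * _)%E; exact/esym/probability_setT.
  have c0 : forall w : Omega, setT w -> (0 <= cst (n.+1%:R * alpha)%:E w :> \bar R)%E.
    by move=> w wT; rewrite lee_fin mulr_ge0 // ltW.
  have mc : measurable_fun setT (cst (n.+1%:R * alpha)%:E : Omega -> \bar R).
    exact: measurable_cst.
  have ms : measurable_fun setT (fun w => \sum_(i < n.+1) (\1_(E i) w)%:E : \bar R).
    apply: emeasurable_sum => i; apply/measurable_realfun.measurable_EFinP.
    exact: measurable_realfun.measurable_indic.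
  apply: (ge0_le_integral _ measurableT c0 mc ms).
  - move=> w _; rewrite sumEFin lee_fin /=.
    have h := cov_atil (Zs w); rewrite /coverage_ok in h.
    have hn : 0 < n.+1%:R :> R by rewrite ltr0n.
    rewrite -(ler_pM2l hn) mulrA mulfV ?gt_eqF // mul1r in h.
    apply: (le_trans h); rewrite le_eqVlt; apply/orP; left; apply/eqP.
    apply: eq_bigr => i _; rewrite indicE.
    have -> : (w \in E i) = Ev (Zs w) i.
      by apply/idP/idP => h'; [exact: (set_mem h') | exact: mem_set].
    by [].
have key2 : ((n.+1%:R * alpha)%:E <= \sum_(i < n.+1) P (E ord_max))%E.
  have -> : \sum_(i < n.+1) P (E ord_max) = \sum_(i < n.+1) P (E i).
    by apply: eq_bigr => i _; rewrite PE.
  exact: key.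
clear key.
have fin : P (E ord_max) \is a fin_num.
  rewrite ge0_fin_numE ?measure_ge0 //.
  exact: le_lt_trans (probability_le1 P (mE ord_max)) (ltry 1).
rewrite -(fineK fin) in key2 *.
rewrite sumEFin sumr_const card_ord lee_fin in key2.
rewrite lee_fin -(ler_pM2l (ltr0Sn R n)) (le_trans key2) //.
by rewrite mulr_natl.
Qed.

Lemma final_thm d (Omega : measurableType d) (P : probability Omega R)
  (PXY : probability (dataT R p) R) (Z : 'I_n.+1 -> Omega -> dataT R p) :
  0 < alpha ->
  iid_from P Z PXY ->
  let Zs := fun w : Omega => (fun i => Z i w) : sampleT R p n in
  (alpha%:E <= P [set w | ((Vs V (Zs w) ord_max)%:E <=
        Q_i V H (Zs w) (alpha_tilde V H alpha (Zs w)) ord_max)%E])%E /\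
  (alpha%:E <= P [set w | ((Vs V (Zs w) ord_max)%:E <=
        Q_hat V H (Zs w) (alpha_tilde V H alpha (Zs w)))%E])%E.
Proof.
move=> a0 iid Zs; have h := @final_main d Omega P PXY Z a0 iid; split; first exact: h.
rewrite (_ : [set w | _] = [set w | Ev (Zs w) ord_max]) //.
by apply/seteqP; split => w /=; rewrite Qhat_le Ev_atil atilE.
Qed.

End LCPproof.

Theorem theorem1 (R : realType) (p n : nat) (d : measure_display)
  (Omega : measurableType d) (P : probability Omega R)
  (PXY : probability (dataT R p) R)
  (Z : 'I_n.+1 -> Omega -> dataT R p)
  (V : sampleT R p n -> dataT R p -> R)
  (H : featT R p n -> Rpow R p -> Rpow R p -> R)
  (alpha : R) :
  iid_from P Z PXY ->
  symmetric_score V ->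
  measurable_fun setT
    (fun zt : (prodfun 'I_n.+1 (dataT R p) * dataT R p)%type => V zt.1 zt.2) ->
  localizer H ->
  measurable_fun setT
    (fun xs : (prodfun 'I_n.+1 (Rpow R p) * (Rpow R p * Rpow R p))%type =>
       H xs.1 xs.2.1 xs.2.2) ->
  0 < alpha < 1 ->
  let Zs := fun w : Omega => (fun i => Z i w) : sampleT R p n in
  (alpha%:E <= P [set w | ((Vs V (Zs w) ord_max)%:E <=
        Q_i V H (Zs w) (alpha_tilde V H alpha (Zs w)) ord_max)%E])%E /\
  (alpha%:E <= P [set w | ((Vs V (Zs w) ord_max)%:E <=
        Q_hat V H (Zs w) (alpha_tilde V H alpha (Zs w)))%E])%E.
Proof.
move=> iid symV hV locH hH /andP[a0 a1].
exact: (@final_thm R p n V H alpha symV locH (ltW a1) hV hH d Omega P PXY Z a0 iid).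
Qed.
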